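(* In the setting described in the context, the workload dimension $d$ equals the number $L$ of buffer pools, and the $L\times I$ matrix $M$ with $M_{li}=1$ if $i\in\mathcal P_l$ and $M_{li}=0$ otherwise is a workload matrix.
   Context: Let $I\ge1$, $J\ge I$; each activity $j\in\{1,\dots,J\}$ has a server $s(j)$ and a buffer $b(j)$ in $\{1,\dots,I\}$, with $s(j)=b(j)=j$ for $j\le I$. Let $A_{ij}=\mathbf1\{s(j)=i\}$, $C_{ij}=\mathbf1\{b(j)=i\}$, $\lambda^*\in(0,\infty)^I$, $\mu_j^*=\lambda^*_{s(j)}$, $R_{ij}=\mu_j^*C_{ij}$, $\eta>0$, $q\in(0,1)^I$ with $\sum q_i=1$, $\nu=\eta q$; assume there is a unique $x^*\in\mathbb{R}^J$ with $x^*_j=\min\{\lambda^*_j,\nu_j\}$ for $j\le I$, $Rx^*=\nu$, $Ax^*=e$, $x^*\ge0$. Activity $j$ is basic if $x_j^*>0$; after relabeling the basic activities are $1,\dots,b$, and $H$, $B$ denote the $I\times b$ submatrices of $R$, $A$ formed by their first $b$ columns. Let $\mathcal N=\{Hy:By=0,\ y\in\mathbb{R}^b\}$ and $\mathcal M=\mathcal N^\perp\subseteq\mathbb{R}^I$; the workload dimension is $d=\dim\mathcal M$, and a workload matrix is any $d\times I$ matrix whose rows form a basis of $\mathcal M$. Buffers $i,i'$ communicate directly if there are basic $j,j'$ with $b(j)=i$, $b(j')=i'$, $s(j)=s(j')$; they communicate if linked by a finite chain of directly communicating buffers. The equivalence classes of communication are the buffer pools $\mathcal P_1,\dots,\mathcal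 P_L$. *)

(* Defs.v *)
From HB Require Import structures.
From mathcomp Require Import all_boot all_order all_algebra.
Set Implicit Arguments. Unset Strict Implicit. Unset Printing Implicit Defensive.
Import Order.TTheory GRing.Theory Num.Theory.
Local Open Scope ring_scope.

Section Network.
Variables (R : realFieldType) (I J : nat).
Variables (s bf : 'I_J -> 'I_I) (lam : 'I_I -> R).

Definition Amx : 'M[R]_(I, J) := \matrix_(i, j) ((s j == i)%:R).
Definition Cmx : 'M[R]_(I, J) := \matrix_(i, j) ((bf j == i)%:R).
Definition mu (j : 'I_J) : R := lam (s j).
Definition Rmx : 'M[R]_(I, J) := \matrix_(i, j) (mu j * Cmx i j).

Variable x : 'cV[R]_J.  (* the (unique) solution x* *)

Definition basicset : {set 'I_J} := [set j | 0 < x j ord0].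

Definition Hmx : 'M[R]_(I, #|basicset|) :=
  colsub (fun k : 'I_#|basicset| => enum_val k) Rmx.
Definition Bmx : 'M[R]_(I, #|basicset|) :=
  colsub (fun k : 'I_#|basicset| => enum_val k) Amx.

(* rows of Nmx span N = { H y : B y = 0 } (as row vectors (H y)^T) *)
Definition Nmx : 'M[R]_(#|basicset|, I) := kermx (Bmx^T) *m Hmx^T.
(* rows of Mmx span M = N^perp = { w : w . v = 0 for all v in N } *)
Definition Mmx : 'M[R]_I := kermx (Nmx^T).

Definition workload_dim : nat := \rank Mmx.

Definition is_workload_matrix (k : nat) (W : 'M[R]_(k, I)) : Prop :=
  k = workload_dim /\ row_free W /\ (W == Mmx)%MS.

Definition dcomm : rel 'I_I := fun i i' =>
  [exists j, exists j', [&& j \in basicset, j' \in basicset,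
     bf j == i, bf j' == i' & s j == s j']].

Definition comm : rel 'I_I := connect dcomm.

Definition pool_of (i : 'I_I) : {set 'I_I} := [set i' | comm i i'].

End Network.

Definition pool_matrix (R : realFieldType) (I L : nat)
  (P : 'I_L -> {set 'I_I}) : 'M[R]_(L, I) :=
  \matrix_(l, i) ((i \in P l)%:R).

Definition is_xstar (R : realFieldType) (I J : nat) (s bf : 'I_J -> 'I_I)
  (lam nu : 'I_I -> R) (x : 'cV[R]_J) : Prop :=
  [/\ (forall (j : 'I_J) (h : (j < I)%N),
         x j ord0 = Num.min (lam (Ordinal h)) (nu (Ordinal h))),
      Rmx s bf lam *m x = \col_i nu i,
      Amx R s *m x = const_mx 1
    & forall j, 0 <= x j ord0].

(* Main.v *)
Require Import Defs.
From HB Require Import structures.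
From mathcomp Require Import all_boot all_order all_algebra.
Import Order.TTheory GRing.Theory Num.Theory.
Local Open Scope ring_scope.

Section S.
Variables (R : realFieldType) (I J : nat) (s bf : 'I_J -> 'I_I) (lam : 'I_I -> R) (x : 'cV[R]_J).

Lemma dcomm_sym : symmetric (dcomm s bf x).
Proof.
move=> a b; apply/idP/idP => /existsP[j /existsP[j' /and5P[h1 h2 h3 h4 h5]]];
  apply/existsP; exists j'; apply/existsP; exists j; by rewrite h1 h2 h3 h4 eq_sym h5.
Qed.

Lemma comm_sym : connect_sym (dcomm s bf x).
Proof. exact: sym_connect_sym dcomm_sym. Qed.

Lemma pool_eq i i' : comm s bf x i i' -> pool_of s bf x i = pool_of s bf x i'.
Proof.
move=> h; apply/setP => k; rewrite !inE /comm.
by rewrite (same_connect comm_sym h).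
Qed.

Lemma mem_pool i : i \in pool_of s bf x i.
Proof. by rewrite inE /comm connect0. Qed.

Lemma dcomm_basic j j' : j \in basicset x -> j' \in basicset x -> s j = s j' ->
  comm s bf x (bf j) (bf j').
Proof.
move=> hj hj' e; apply: connect1; apply/existsP; exists j; apply/existsP; exists j'.
by rewrite hj hj' !eqxx e eqxx.
Qed.

Lemma Hmx_E i k : Hmx s bf lam x i k = mu s lam (enum_val k) * (bf (enum_val k) == i)%:R.
Proof. by rewrite !mxE. Qed.
Lemma Bmx_E i k : Bmx s x i k = (s (enum_val k) == i)%:R.
Proof. by rewrite !mxE. Qed.
End S.

Theorem lemma2 (R : realFieldType) (I J : nat)
  (s bf : 'I_J -> 'I_I) (lam q : 'I_I -> R) (eta : R) (x : 'cV[R]_J)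
  (L : nat) (P : 'I_L -> {set 'I_I}) :
  (1 <= I)%N -> (I <= J)%N ->
  (forall j : 'I_J, (j < I)%N -> nat_of_ord (s j) = j /\ nat_of_ord (bf j) = j) ->
  (forall i, 0 < lam i) ->
  0 < eta ->
  (forall i, 0 < q i < 1) ->
  \sum_i q i = 1 ->
  is_xstar s bf lam (fun i => eta * q i) x ->
  (forall x' : 'cV[R]_J, is_xstar s bf lam (fun i => eta * q i) x' -> x' = x) ->
  (* P_1, ..., P_L is an enumeration of the buffer pools *)
  injective P ->
  (forall l, exists i, P l = pool_of s bf x i) ->
  (forall i, exists l, P l = pool_of s bf x i) ->
  workload_dim s bf lam x = L /\
  is_workload_matrix s bf lam x (pool_matrix R P).
Proof.
move=> _ _ _ lam_pos _ _ _ _ _ Pinj Psur Ptot.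
have exP l : exists i, P l == pool_of s bf x i.
  by have [i hi] := Psur l; exists i; apply/eqP.
pose rep l := xchoose (exP l).
have Hrep l : P l = pool_of s bf x (rep l) by apply/eqP; exact: (xchooseP (exP l)).
have inP l i : i \in P l -> P l = pool_of s bf x i.
  by rewrite Hrep inE => h; exact: pool_eq.
set W := pool_matrix R P.
set K := kermx (Bmx s x)^T.
have BK : Bmx s x *m K^T = 0.
  by rewrite -[Bmx s x]trmxK -trmx_mul mulmx_ker trmx0.
have WM : (W <= Mmx s bf lam x)%MS.
  rewrite /Mmx sub_kermx /Nmx trmx_mul trmxK -/K.
  pose G := \matrix_(l, k) (lam k * [exists j, (j \in basicset x) && (s j == k) && (bf j \in P l)]%:R).
  have WH : W *m Hmx s bf lam x = G *m Bmx s x.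
    apply/matrixP => l k; rewrite !mxE.
    under eq_bigr do rewrite !mxE.
    under [RHS]eq_bigr do rewrite !mxE.
    rewrite (bigD1 (bf (enum_val k))) //= big1 ?addr0; last first.
      by move=> i hi; rewrite eq_sym in hi; rewrite (negbTE hi) mulr0 mulr0.
    rewrite [RHS](bigD1 (s (enum_val k))) //= [X in _ = _ + X]big1 ?addr0; last first.
      by move=> i hi; rewrite eq_sym in hi; rewrite (negbTE hi) mulr0.
    rewrite !eqxx !mulr1 /mu mulrC; congr (_ * _%:R).
    congr nat_of_bool; apply/idP/idP; last first.
      move=> /existsP[j /andP[/andP[hj /eqP hs] hP]].
      rewrite (inP _ _ hP) (@pool_eq _ _ _ s bf x _ _ (@dcomm_basic _ _ _ s bf x _ _ hj (enum_valP k) hs)); exact: mem_pool.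
    by move=> h; apply/existsP; exists (enum_val k); rewrite enum_valP eqxx h.
  by rewrite mulmxA WH -mulmxA BK mulmx0.
have MW : (Mmx s bf lam x <= W)%MS.
  apply/row_subP => r.
  set u := row r (Mmx s bf lam x).
  have uN : u *m (Nmx s bf lam x)^T = 0 by rewrite /u -row_mul mulmx_ker row0.
  have uHK : u *m Hmx s bf lam x *m K^T = 0.
    by move: uN; rewrite /Nmx trmx_mul trmxK mulmxA.
  clearbody u.
  have uH k : \sum_i u 0 i * Hmx s bf lam x i k = u 0 (bf (enum_val k)) * mu s lam (enum_val k).
    under eq_bigr do rewrite !mxE.
    rewrite (bigD1 (bf (enum_val k))) //= big1 ?addr0; last first.
      by move=> i hi; rewrite eq_sym in hi; rewrite (negbTE hi) mulr0 mulr0.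
    by rewrite eqxx mulr1.
  have cst j j' : j \in basicset x -> j' \in basicset x -> s j = s j' ->
      u 0 (bf j) = u 0 (bf j').
    move=> hj hj' e.
    pose k := enum_rank_in hj j; pose k' := enum_rank_in hj j'.
    have ek : enum_val k = j := enum_rankK_in hj hj.
    have ek' : enum_val k' = j' := enum_rankK_in hj hj'.
    pose y : 'cV[R]_#|basicset x| := delta_mx k 0 - delta_mx k' 0.
    have By : Bmx s x *m y = 0.
      rewrite mulmxBr -!colE; apply/eqP; rewrite subr_eq0; apply/eqP/matrixP => i z.
      by rewrite !mxE ek ek' e.
    have : (y^T <= K)%MS by rewrite sub_kermx -trmx_mul By trmx0.
    case/submxP => a ha.
    have : u *m Hmx s bf lam x *m y = 0.
      by rewrite -[y]trmxK ha trmx_mul mulmxA uHK mul0mx.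
    rewrite mulmxBr -!colE => /matrixP/(_ 0 0) hm.
    move: hm; rewrite !mxE uH uH ek ek' /mu e => /eqP; rewrite subr_eq0 => /eqP hh.
    by apply: (mulIf _ hh); rewrite gt_eqF.
  have cstc i i' : comm s bf x i i' -> u 0 i = u 0 i'.
    move=> /connectP[p]; elim: p i => [|a p IH] i /=; first by move=> _ ->.
    case/andP => /existsP[j /existsP[j' /and5P[hj hj' /eqP bj /eqP bj' /eqP e]]] hp hl.
    by rewrite -bj (cst j j' hj hj' e) bj'; exact: IH.
  apply/submxP; exists (\row_l u 0 (rep l)); apply/rowP => i.
  rewrite [RHS]mxE; under eq_bigr do rewrite !mxE.
  have [l0 hl0] := Ptot i.
  rewrite (bigD1 l0) //= big1 ?addr0; last first.
    move=> l hl; case: (boolP (i \in P l)) => h; last by rewrite /= mulr0n mulr0.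
    by have := inP _ _ h; rewrite -hl0 => /Pinj ee; rewrite ee eqxx in hl.
  rewrite hl0 mem_pool mulr1; apply/esym/cstc.
  by have := @mem_pool _ _ _ s bf x i; rewrite -hl0 Hrep inE.
have rf : row_free W.
  apply/row_freeP; exists (\matrix_(i, l) (i == rep l)%:R).
  apply/matrixP => l l'; rewrite !mxE.
  under eq_bigr do rewrite !mxE.
  rewrite (bigD1 (rep l')) //= big1 ?addr0; last first.
    by move=> i hi; rewrite (negbTE hi) mulr0.
  rewrite eqxx mulr1.
  case: (eqVneq l l') => [->|ne]; first by rewrite Hrep mem_pool.
  case h: (rep l' \in P l) => //.
  by have := inP _ _ h; rewrite -Hrep => /Pinj ee; rewrite ee eqxx in ne.
have eqWM : (W == Mmx s bf lam x)%MS by apply/andP.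
have dimL : workload_dim s bf lam x = L.
  rewrite /workload_dim -(eqmx_rank eqWM); exact: (eqP rf).
split; first exact: dimL.
split; first by rewrite dimL.
by split.
Qed.
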